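(* If $H$ is a minimal $Q$-triconnected graph, then the contracted version of $H$ is also a minimal $Q$-triconnected graph.
   Context: Two vertices are triconnected if there are three internally vertex-disjoint paths between them. $H$ is $Q$-triconnected if every pair of vertices of $Q$ is triconnected in $H$; it is minimal if deleting any edge or vertex violates this. The contracted version of $H$ is obtained by contracting edges incident to vertices of degree two until no vertex of degree two remains, so that every maximal path of $H$ whose internal vertices have degree two becomes a single edge (the resulting graph may have parallel edges). *)

(* Defs.v *)
(* Finite multigraphs over ambient finite types of vertices
   and edges; each edge has two (unordered) endpoints src/tgt. *)
From mathcomp Require Import all_boot.
Set Implicit Arguments. Unset Strict Implicit. Unset Printing Implicit Defensive.

Record mgraph (V E : finType) := MGraph {
  vset : {set V};
  eset : {set E};
  src  : E -> V;
  tgt  : E -> V }.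

Section Graphs.
Variables V E : finType.
Implicit Types (H : mgraph V E) (u v w x : V) (e f : E).

Definition wf H := forall e, e \in eset H -> src H e \in vset H /\ tgt H e \in vset H.

Definition simple H :=
  (forall e, e \in eset H -> src H e != tgt H e) /\
  (forall e f, e \in eset H -> f \in eset H -> e != f ->
     ~ ((src H e = src H f /\ tgt H e = tgt H f) \/
        (src H e = tgt H f /\ tgt H e = src H f))).

(* degree, loops counted twice *)
Definition deg H v : nat :=
  #|[set e in eset H | src H e == v]| + #|[set e in eset H | tgt H e == v]|.

Definition joins H e y x : bool :=
  (e \in eset H) && (((src H e == y) && (tgt H e == x)) || ((tgt H e == y) && (src H e == x))).

Fixpoint walk H (y : V) (p : seq (E * V)) : bool :=
  if p is (e, x) :: p' then joins H e y x && walk H x p' else true.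

Definition is_path H u v (p : seq (E * V)) : bool :=
  [&& walk H u p, uniq (u :: map snd p), all (fun x => x \in vset H) (u :: map snd p)
    & last u (map snd p) == v].

Definition inner u v (p : seq (E * V)) : seq V :=
  [seq x <- u :: map snd p | (x != u) && (x != v)].

Definition int_disjoint u v (p q : seq (E * V)) : Prop :=
  forall x, x \in inner u v p -> x \notin inner u v q.

Definition triconnected H u v : Prop :=
  exists p1 p2 p3,
    [/\ is_path H u v p1, is_path H u v p2 & is_path H u v p3] /\
    [/\ p1 != p2, p1 != p3 & p2 != p3] /\
    [/\ int_disjoint u v p1 p2, int_disjoint u v p1 p3 & int_disjoint u v p2 p3].

Definition Qtriconnected H (Q : {set V}) : Prop :=
  Q \subset vset H /\
  forall u v, u \in Q -> v \in Q -> u != v -> triconnected H u v.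

Definition del_edge H e : mgraph V E :=
  MGraph (vset H) (eset H :\ e) (src H) (tgt H).

Definition del_vertex H x : mgraph V E :=
  MGraph (vset H :\ x) [set g in eset H | (src H g != x) && (tgt H g != x)]
         (src H) (tgt H).

Definition minimal_Qtriconnected H (Q : {set V}) : Prop :=
  [/\ Qtriconnected H Q,
      forall e, e \in eset H -> ~ Qtriconnected (del_edge H e) Q
    & forall x, x \in vset H -> ~ Qtriconnected (del_vertex H x) Q].

(* one contraction step: w has degree 2, with incident edges e (joining w to
   x <> w) and f <> e; contract e, i.e. delete w and e and reattach the
   w-end of f to x *)
Definition contract_step H H' : Prop :=
  exists w x e f,
    [/\ w \in vset H, deg H w = 2, x != w & joins H e w x] /\
    [/\ f \in eset H, f != e & (src H f == w) || (tgt H f == w)] /\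
    H' = MGraph (vset H :\ w) (eset H :\ e)
           (fun g => if (g == f) && (src H g == w) then x else src H g)
           (fun g => if (g == f) && (tgt H g == w) then x else tgt H g).

Inductive contracts : mgraph V E -> mgraph V E -> Prop :=
  | contracts_refl H : contracts H H
  | contracts_step H H1 H2 : contract_step H H1 -> contracts H1 H2 -> contracts H H2.

Definition contracted_version H H' : Prop :=
  contracts H H' /\ forall v, v \in vset H' -> deg H' v != 2.

End Graphs.

(* Main.v *)
Require Import Defs.
From mathcomp Require Import all_boot.
Set Implicit Arguments. Unset Strict Implicit. Unset Printing Implicit Defensive.

Lemma joinsC (V E : finType) (G : mgraph V E) g b c : joins G g b c = joins G g c b.
Proof.
rewrite /joins; case: (_ \in _) => //=.
by case: (src G g == b); case: (tgt G g == c); case: (tgt G g == b); case: (src G g == c).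
Qed.

Lemma step_mem (V E : finType) (G : mgraph V E) a p g c :
  walk G a p -> (g, c) \in p -> exists2 b, b \in a :: map snd p & joins G g b c.
Proof.
elim: p a => [|[g' z] p IH] a //= /andP[J W]; rewrite inE => /orP[/eqP[-> ->]|M].
  by exists a; rewrite ?inE ?eqxx.
have [b Hb Jb] := IH _ W M; exists b => //.
by rewrite inE Hb orbT.
Qed.

Lemma walk_mono (V E : finType) (G G' : mgraph V E) a p :
  (forall g b c, b \in a :: map snd p -> c \in a :: map snd p ->
     joins G g b c -> joins G' g b c) -> walk G a p -> walk G' a p.
Proof.
elim: p a => [|[g z] p IH] a //= Hj /andP[J W].
rewrite (Hj g a z) ?inE ?eqxx ?orbT //=.
apply: IH W => g' b c Hb Hc; apply: Hj; rewrite inE ?Hb ?Hc orbT //.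
Qed.

Lemma path_mono (V E : finType) (G G' : mgraph V E) u v p :
  (forall g b c, b \in u :: map snd p -> c \in u :: map snd p ->
     joins G g b c -> joins G' g b c) ->
  (forall z, z \in u :: map snd p -> z \in vset G') ->
  is_path G u v p -> is_path G' u v p.
Proof.
move=> Hj Hv /and4P[W U A L]; apply/and4P; split => //.
  exact: walk_mono W.
by apply/allP => z /Hv.
Qed.

Lemma tric_map (V E : finType) (G G' : mgraph V E) u v (m : seq (E * V) -> seq (E * V)) :
  (forall p, is_path G u v p -> is_path G' u v (m p)) ->
  (forall p q, is_path G u v p -> is_path G u v q -> p != q -> int_disjoint u v p q ->
     m p != m q /\ int_disjoint u v (m p) (m q)) ->
  triconnected G u v -> triconnected G' u v.
Proof.
move=> Hp Hd [p1 [p2 [p3 [[P1 P2 P3] [[N12 N13 N23] [D12 D13 D23]]]]]].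
have [M12 E12] := Hd _ _ P1 P2 N12 D12.
have [M13 E13] := Hd _ _ P1 P3 N13 D13.
have [M23 E23] := Hd _ _ P2 P3 N23 D23.
exists (m p1), (m p2), (m p3); split; first by split; apply: Hp.
by split.
Qed.

Lemma Qtric_mono (V E : finType) (G G' : mgraph V E) Q :
  (forall g b c, joins G g b c -> joins G' g b c) ->
  vset G \subset vset G' -> Qtriconnected G Q -> Qtriconnected G' Q.
Proof.
move=> Hj Hs [HQ Ht]; split; first exact: subset_trans Hs.
move=> u v Hu Hv Huv; apply: (@tric_map _ _ G G' u v id) => //; last exact: Ht.
move=> p P; apply: (path_mono _ _ P) => [g b c _ _|z Hz]; first exact: Hj.
move: P => /and4P[_ _ /allP A _]; exact: (subsetP Hs _ (A _ Hz)).
Qed.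

Definition contr (V E : finType) (H : mgraph V E) w x e f : mgraph V E :=
  MGraph (vset H :\ w) (eset H :\ e)
           (fun g => if (g == f) && (src H g == w) then x else src H g)
           (fun g => if (g == f) && (tgt H g == w) then x else tgt H g).

Definition SD (V E : finType) (H : mgraph V E) w x y e f : Prop :=
  [/\ w \in vset H, x \in vset H, y \in vset H, x != w & y != w] /\
  [/\ joins H e w x, joins H f w y, e != f &
      forall g, g \in eset H -> g != e -> g != f -> (src H g != w) && (tgt H g != w)].

Lemma joins_ends (V E : finType) (G : mgraph V E) g w x b c :
  joins G g w x -> joins G g b c -> (b = w /\ c = x) \/ (b = x /\ c = w).
Proof.
rewrite /joins => /andP[_ /orP[/andP[/eqP s /eqP t]|/andP[/eqP t /eqP s]]]
  /andP[_ /orP[/andP[/eqP s' /eqP t']|/andP[/eqP t' /eqP s']]];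
 rewrite -?s -?t -?s' -?t'; move: s s' t t'; (try move=> ->); (try move=> ->); auto;
 intros; subst; auto.
Qed.

Lemma SD_other (V E : finType) (H : mgraph V E) w x y e f g b c :
  SD H w x y e f -> joins H g b c -> g != e -> g != f -> b != w /\ c != w.
Proof.
move=> [_ [_ _ _ Hg]] /andP[Ge J] ne nf; move: (Hg g Ge ne nf) => /andP[s t].
by case/orP: J => /andP[/eqP <- /eqP <-]; split.
Qed.

Lemma contr_joins (V E : finType) (H : mgraph V E) w x y e f g b c :
  SD H w x y e f -> g != e -> g != f -> joins (contr H w x e f) g b c = joins H g b c.
Proof.
move=> _ ne nf; rewrite /joins /= !inE ne (negbTE nf) /=; done.
Qed.

Lemma contr_joins_e (V E : finType) (H : mgraph V E) w x e f b c :
  joins (contr H w x e f) e b c = false.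
Proof. by rewrite /joins /= !inE eqxx. Qed.

Lemma contr_joins_f (V E : finType) (H : mgraph V E) w x y e f b c :
  SD H w x y e f -> joins (contr H w x e f) f b c = ((b == x) && (c == y)) || ((b == y) && (c == x)).
Proof.
move=> [[_ _ _ xw yw] [_ Jf ef _]]; rewrite /joins /= !inE eq_sym ef eqxx /=.
move: Jf; rewrite /joins => /andP[-> /orP[/andP[/eqP s /eqP t]|/andP[/eqP t /eqP s]]];
 rewrite s t eqxx /= ?(negbTE yw) /=.
  by rewrite !(eq_sym b) !(eq_sym c).
by rewrite !(eq_sym b) !(eq_sym c) orbC.
Qed.

Lemma inc_w (V E : finType) (H : mgraph V E) w x y e f g b c :
  SD H w x y e f -> joins H g b c -> b = w \/ c = w -> g = e \/ g = f.
Proof.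
move=> S J bcw; case: (eqVneq g e) => ge; first by left.
case: (eqVneq g f) => gf; first by right.
have [/eqP bw /eqP cw] := SD_other S J ge gf; by case: bcw.
Qed.

Fixpoint cmap (V E : finType) (w : V) (e f : E) (p : seq (E * V)) : seq (E * V) :=
  if p is s :: p' then
    (if s.2 == w then cmap w e f p' else ((if s.1 == e then f else s.1), s.2) :: cmap w e f p')
  else [::].

Lemma cmap_snd (V E : finType) (w : V) (e f : E) p :
  map snd (cmap w e f p) = filter (predC1 w) (map snd p).
Proof. by elim: p => //= [[g z] p IH] /=; case: (z == w) => //=; rewrite IH. Qed.

Lemma last_filter (T : eqType) (a : pred T) u s :
  a (last u s) -> last u (filter a s) = last u s.
Proof.
elim: s u => //= z s IH u Ha; case: ifP => az /=; first exact: IH.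
case: s IH Ha => [|z' s] IH Ha /=; first by rewrite Ha in az.
by rewrite IH.
Qed.

Lemma walk_cmap (V E : finType) (H : mgraph V E) w x y e f n p a :
  SD H w x y e f -> size p <= n -> walk H a p -> uniq (a :: map snd p) -> a != w ->
  last a (map snd p) != w -> walk (contr H w x e f) a (cmap w e f p).
Proof.
move=> S; have [[_ _ _ xw yw] [Je Jf ef _]] := S.
elim: n p a => [|n IH] [|[g z] p] a //= Hs /andP[J W] /andP[U1 U] aw L.
case: (eqVneq z w) => zw.
  subst z; case: p Hs W U1 U L => [|[g2 z2] p] Hs W U1 U L; first by rewrite eqxx in L.
  move: W => /= /andP[J2 W]; move: U => /= /andP[U2 U].
  have z2w : z2 != w by apply: contraNneq U2 => ->; rewrite inE eqxx.
  have az2 : a != z2 by apply: contraNneq U1 => ->; rewrite !inE eqxx orbT.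
  rewrite (negbTE z2w) /=; apply/andP; split; last first.
    apply: IH => //; first by rewrite -ltnS ltnW.
  have [ge|gf] := inc_w S J (or_intror erefl);
  have [g2e|g2f] := inc_w S J2 (or_introl erefl); subst g g2.
  - have [[aw' _]|[ax _]] := joins_ends Je J; first by rewrite aw' eqxx in aw.
    have [[_ zx]|[wx _]] := joins_ends Je J2; last by rewrite wx eqxx in xw.
    by rewrite ax zx eqxx in az2.
  - have [[aw' _]|[ax _]] := joins_ends Je J; first by rewrite aw' eqxx in aw.
    have [[_ zy]|[wy _]] := joins_ends Jf J2; last by rewrite wy eqxx in yw.
    by rewrite eq_sym (negbTE ef) (contr_joins_f _ _ S) ax zy !eqxx.
  - have [[aw' _]|[ay _]] := joins_ends Jf J; first by rewrite aw' eqxx in aw.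
    have [[_ zx]|[wx _]] := joins_ends Je J2; last by rewrite wx eqxx in xw.
    by rewrite eqxx (contr_joins_f _ _ S) ay zx !eqxx orbT.
  - have [[aw' _]|[ay _]] := joins_ends Jf J; first by rewrite aw' eqxx in aw.
    have [[_ zy]|[wy _]] := joins_ends Jf J2; last by rewrite wy eqxx in yw.
    by rewrite ay zy eqxx in az2.
have ge : g != e.
  apply/eqP => ge; subst g; have [[aw' _]|[_ zw']] := joins_ends Je J.
    by rewrite aw' eqxx in aw.
  by rewrite zw' eqxx in zw.
have gf : g != f.
  apply/eqP => gf; subst g; have [[aw' _]|[_ zw']] := joins_ends Jf J.
    by rewrite aw' eqxx in aw.
  by rewrite zw' eqxx in zw.
rewrite (negbTE ge) /= (contr_joins _ _ S ge gf) J /=.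
by apply: IH.
Qed.

Lemma path_cmap (V E : finType) (H : mgraph V E) w x y e f u v p :
  SD H w x y e f -> u != w -> v != w -> is_path H u v p ->
  is_path (contr H w x e f) u v (cmap w e f p).
Proof.
move=> S uw vw /and4P[W U A /eqP L]; apply/and4P; split.
- by apply: (walk_cmap (n := size p) S) => //; rewrite L.
- rewrite cmap_snd /=; move: U => /= /andP[U1 U]; rewrite filter_uniq // andbT.
  by rewrite mem_filter negb_and U1 orbT.
- rewrite cmap_snd /=; move: A => /= /andP[Au /allP A].
  rewrite !inE uw Au /=; apply/allP => z; rewrite mem_filter /= => /andP[zw Hz].
  by rewrite !inE zw A.
- rewrite cmap_snd last_filter; first by rewrite L.
  by rewrite /= L.
Qed.

Lemma inner_cmap (V E : finType) w (e f : E) (u v z : V) p :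
  z \in inner u v (cmap w e f p) -> z \in inner u v p.
Proof.
rewrite /inner cmap_snd !mem_filter => /andP[-> /=]; rewrite !inE.
by case/orP=> [->//|]; rewrite mem_filter => /andP[_ ->]; rewrite orbT.
Qed.

Lemma cmap_id (V E : finType) (H : mgraph V E) w x y e f a p :
  SD H w x y e f -> walk H a p -> a != w -> w \notin map snd p ->
  cmap w e f p = p /\ f \notin map fst p.
Proof.
move=> S; have [[_ _ _ xw yw] [Je Jf ef _]] := S.
elim: p a => [|[g z] p IH] a //= /andP[J W] aw; rewrite inE negb_or => /andP[wz Hw].
rewrite eq_sym in wz; rewrite (negbTE wz).
have [-> Hf] := IH z W wz Hw.
have ge : g != e.
  apply/eqP => ge; subst g; have [[aw' _]|[_ zw']] := joins_ends Je J.
    by rewrite aw' eqxx in aw.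
  by rewrite zw' eqxx in wz.
have gf : g != f.
  apply/eqP => gf; subst g; have [[aw' _]|[_ zw']] := joins_ends Jf J.
    by rewrite aw' eqxx in aw.
  by rewrite zw' eqxx in wz.
by rewrite (negbTE ge) inE negb_or eq_sym gf.
Qed.

Lemma thru_w (V E : finType) (H : mgraph V E) w x y e f a p :
  SD H w x y e f -> walk H a p -> uniq (a :: map snd p) -> a != w ->
  last a (map snd p) != w -> w \in map snd p ->
  (x != y) && (f \in map fst (cmap w e f p)).
Proof.
move=> S; have [[_ _ _ xw yw] [Je Jf ef _]] := S.
elim: p a => [|[g z] p IH] a //= /andP[J W] /andP[U1 U] aw L; rewrite inE.
case: (eqVneq z w) => zw /=.
  subst z; case: p W U1 U L IH => [|[g2 z2] p] W U1 U L IH; first by rewrite eqxx in L.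
  move: W => /= /andP[J2 W]; move: U => /= /andP[U2 U].
  have z2w : z2 != w by apply: contraNneq U2 => ->; rewrite inE eqxx.
  have az2 : a != z2 by apply: contraNneq U1 => ->; rewrite !inE eqxx orbT.
  move=> _; rewrite (negbTE z2w) /= inE.
  have [ge|gf] := inc_w S J (or_intror erefl);
  have [g2e|g2f] := inc_w S J2 (or_introl erefl); subst g g2.
  - have [[aw' _]|[ax _]] := joins_ends Je J; first by rewrite aw' eqxx in aw.
    have [[_ zx]|[wx _]] := joins_ends Je J2; last by rewrite wx eqxx in xw.
    by rewrite ax zx eqxx in az2.
  - have [[aw' _]|[ax _]] := joins_ends Je J; first by rewrite aw' eqxx in aw.
    have [[_ zy]|[wy _]] := joins_ends Jf J2; last by rewrite wy eqxx in yw.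
    by rewrite if_same eqxx -ax -zy az2.
  - have [[aw' _]|[ay _]] := joins_ends Jf J; first by rewrite aw' eqxx in aw.
    have [[_ zx]|[wx _]] := joins_ends Je J2; last by rewrite wx eqxx in xw.
    by rewrite !eqxx -ay -zx eq_sym az2.
  - have [[aw' _]|[ay _]] := joins_ends Jf J; first by rewrite aw' eqxx in aw.
    have [[_ zy]|[wy _]] := joins_ends Jf J2; last by rewrite wy eqxx in yw.
    by rewrite ay zy eqxx in az2.
move=> Hw.
have /andP[-> Hf] := IH z W U zw L Hw.
by rewrite inE Hf orbT.
Qed.

Lemma cmap_dist (V E : finType) (H : mgraph V E) w x y e f u v p q :
  SD H w x y e f -> u != w -> v != w -> is_path H u v p -> is_path H u v q ->
  p != q -> int_disjoint u v p q -> cmap w e f p != cmap w e f q.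
Proof.
move=> S uw vw Pp Pq npq D.
move: (Pp) (Pq) => /and4P[Wp Up _ /eqP Lp] /and4P[Wq Uq _ /eqP Lq].
have inn (r : seq (E * V)) : w \in map snd r -> w \in inner u v r.
  by move=> Hr; rewrite /inner mem_filter eq_sym uw eq_sym vw /= inE Hr orbT.
case Hp: (w \in map snd p); case Hq: (w \in map snd q).
- by have := D _ (inn _ Hp); rewrite inn.
- have /andP[_ Fp] := thru_w S Wp Up uw ltac:(by rewrite Lp) Hp.
  have [Cq Fq] := cmap_id S Wq uw (negbT Hq).
  by apply: contraNneq Fq => E1; rewrite -{1}Cq -E1.
- have /andP[_ Fq] := thru_w S Wq Uq uw ltac:(by rewrite Lq) Hq.
  have [Cp Fp] := cmap_id S Wp uw (negbT Hp).
  by apply/eqP => E1; move: Fp; rewrite -Cp E1 Fq.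
- have [Cp _] := cmap_id S Wp uw (negbT Hp).
  have [Cq _] := cmap_id S Wq uw (negbT Hq).
  by rewrite Cp Cq.
Qed.

Lemma Qtric_contr (V E : finType) (H : mgraph V E) w x y e f (Q : {set V}) :
  SD H w x y e f -> w \notin Q -> Qtriconnected H Q -> Qtriconnected (contr H w x e f) Q.
Proof.
move=> S wQ [HQ Ht]; split.
  apply/subsetP => z Hz; rewrite /= in_setD1 (subsetP HQ _ Hz) andbT.
  by apply: contraNneq wQ => <-.
move=> u v Hu Hv uv.
have uw : u != w by apply: contraNneq wQ => <-.
have vw : v != w by apply: contraNneq wQ => <-.
apply: (tric_map (m := cmap w e f) _ _ (Ht u v Hu Hv uv)).
  by move=> p; apply: (path_cmap S uw vw).
move=> p q Pp Pq npq D; split; first exact: (cmap_dist S uw vw Pp Pq npq D).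
by move=> z /inner_cmap Hz; apply: contraNN (D z Hz) => /inner_cmap.
Qed.

Definition XD (V E : finType) (G G1 : mgraph V E) w x y e f : Prop :=
  [/\ w \in vset G, w \notin vset G1, vset G1 \subset vset G & x != y] /\
  [/\ joins G e w x, joins G f w y, e != f,
     forall g b c, g != f -> joins G1 g b c -> joins G g b c &
     forall b c, joins G1 f b c -> (b = x /\ c = y) \/ (b = y /\ c = x)].

Definition chk (V E : finType) (w y : V) (e f : E) (s : E * V) : seq (E * V) :=
  if s.1 == f then (if s.2 == y then [:: (e, w); (f, y)] else [:: (f, w); (e, s.2)])
  else [:: s].

Fixpoint xmap (V E : finType) (w y : V) (e f : E) (p : seq (E * V)) : seq (E * V) :=
  if p is s :: p' then chk w y e f s ++ xmap w y e f p' else [::].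

Lemma walk_xmap (V E : finType) (G G1 : mgraph V E) w x y e f a p :
  XD G G1 w x y e f -> walk G1 a p -> walk G a (xmap w y e f p).
Proof.
move=> [[_ _ _ xy] [Je Jf ef Hg Hf]].
elim: p a => [|[g z] p IH] a //= /andP[J W]; rewrite /chk /=.
case: (eqVneq g f) => gf /=.
  subst g; have [[ax zy]|[ay zx]] := Hf _ _ J; subst.
    by rewrite eqxx /= joinsC Je Jf /= IH.
  by rewrite (negbTE xy) /= joinsC Jf Je /= IH.
by rewrite (Hg _ _ _ gf J) IH.
Qed.

Lemma chk_snd (V E : finType) w y (e f : E) (s : E * V) z :
  z \in map snd (chk w y e f s) -> z = w \/ z = s.2.
Proof.
rewrite /chk; case: ifP => _; [case: eqP => [->|_]|] => /=; rewrite !inE;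
  try (case/orP => /eqP ->; auto); move=> /eqP ->; auto.
Qed.

Lemma xmap_snd (V E : finType) w y (e f : E) (p : seq (E * V)) z :
  z \in map snd (xmap w y e f p) -> z \in map snd p \/ z = w.
Proof.
elim: p => [|[g c] p IH] //=; rewrite map_cat mem_cat inE => /orP[/chk_snd [->|->]|/IH [->|->]];
  rewrite ?eqxx ?orbT; auto.
Qed.

Lemma xmap_last (V E : finType) w y (e f : E) (p : seq (E * V)) a :
  last a (map snd (xmap w y e f p)) = last a (map snd p).
Proof.
elim: p a => [|[g c] p IH] a //=; rewrite map_cat last_cat IH /chk /=.
by case: ifP => _; [case: eqP => [->|_]|].
Qed.

Lemma xmap_w (V E : finType) w y (e f : E) (p : seq (E * V)) :
  w \in map snd (xmap w y e f p) -> w \notin map snd p -> f \in map fst p.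
Proof.
elim: p => [|[g c] p IH] //=; rewrite map_cat mem_cat !inE negb_or => /orP[H1|H1] /andP[wc Hw].
  move: H1; rewrite /chk /=; case: (eqVneq g f) => gf //.
  by rewrite /= inE (negbTE wc).
by rewrite IH ?orbT.
Qed.

Lemma uniq_xmap (V E : finType) (G G1 : mgraph V E) w x y e f a p :
  XD G G1 w x y e f -> walk G1 a p -> uniq (a :: map snd p) ->
  all (fun z => z \in vset G1) (a :: map snd p) -> uniq (a :: map snd (xmap w y e f p)).
Proof.
move=> X; have [[_ wG1 _ xy] [Je Jf ef Hg Hf]] := X.
have notw z : z \in vset G1 -> z != w by apply: contraTneq => ->.
elim: p a => [|[g z] p IH] a //= /andP[J W] /andP[U1 U] /andP[Aa /andP[Az A]].
rewrite map_cat.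
have anot : a \notin map snd (xmap w y e f p).
  apply/negP => /xmap_snd [Ha|aw]; first by rewrite inE Ha orbT in U1.
  by move: (notw _ Aa); rewrite aw eqxx.
rewrite /chk /=; case: (eqVneq g f) => gf /=; last first.
  rewrite inE negb_or anot andbT; move: U1; rewrite inE negb_or => /andP[-> _] /=.
  by have := IH z W U (introT andP (conj Az A)).
subst g.
have fnot : f \notin map fst p.
  apply/negP => /mapP[[g c] Hgc /= gf]; subst g.
  have [b Hb Jb] := step_mem W Hgc.
  have Hc : c \in map snd p by apply/mapP; exists (f, c).
  have abc : a = b \/ a = c.
    by have [[-> _]|[-> _]] := Hf _ _ J; have [[-> ->]|[-> ->]] := Hf _ _ Jb; auto.
  move: U1; rewrite inE negb_or; case: abc => -> /andP[bz bn].
    by move: Hb; rewrite inE (negbTE bz) (negbTE bn).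
  by rewrite Hc in bn.
have wnot : w \notin map snd (xmap w y e f p).
  by apply/negP => /xmap_w H1; rewrite H1 // in fnot; apply/negP => /(allP A) /notw; rewrite eqxx.
have := IH z W U (introT andP (conj Az A)); rewrite /= => /andP[zn Ux].
case: eqP => [zy|_] /=; rewrite !inE !negb_or Ux ?zn ?wnot ?anot !andbT /=.
- subst z; rewrite (notw _ Aa) [w == y]eq_sym (notw _ Az) zn /= andbT.
  by move: U1; rewrite inE negb_or => /andP[-> _].
- rewrite (notw _ Aa) [w == z]eq_sym (notw _ Az) !andbT.
  by move: U1; rewrite inE negb_or => /andP[-> _].
Qed.

Lemma xmap_inj (V E : finType) w y (e f : E) (p q : seq (E * V)) :
  e != f -> w \notin map snd p -> w \notin map snd q -> xmap w y e f p = xmap w y e f q -> p = q.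
Proof.
move/eqP => ef.
elim: p q => [|[g z] p IH] [|[g' z'] q] //=; rewrite ?inE ?negb_or.
- by move=> _ _; rewrite /chk; case: ifP => //; case: ifP.
- by move=> _ _; rewrite /chk; case: ifP => //; case: ifP.
move=> /andP[/eqP wz Hp] /andP[/eqP wz' Hq] Heq.
suff [E1 E2] : (g, z) = (g', z') /\ xmap w y e f p = xmap w y e f q by rewrite E1 (IH q).
move: Heq; rewrite /chk /=; case: (g =P f) => gf; case: (g' =P f) => gf';
  try case: (z =P y) => zy; try case: (z' =P y) => zy'; move=> /= Heq; split; congruence.
Qed.

Lemma only_direct (V E : finType) (G : mgraph V E) u v f p :
  walk G u p -> uniq (u :: map snd p) -> last u (map snd p) = v -> f \in map fst p ->
  (forall b c, joins G f b c -> (b = u /\ c = v) \/ (b = v /\ c = u)) -> p = [:: (f, v)].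
Proof.
case: p => [|[g z] p] //= /andP[J W] /andP[U1 U] L; rewrite inE => Hf Hends.
case: (eqVneq g f) => gf.
  subst g; have [[_ zv]|[_ zu]] := Hends _ _ J; last by rewrite zu inE eqxx in U1.
  subst z; case: p W U1 U L {Hf} => [|[g2 z2] p] //= W U1 /andP[U2 _] L.
  by move: U2; rewrite -{1}L mem_last.
move: Hf; rewrite eq_sym (negbTE gf) /= => /mapP[[g2 c] Hgc /= e2]; subst g2.
have [b Hb Jb] := step_mem W Hgc.
have Hc : c \in map snd p by apply/mapP; exists (f, c).
have [[bu _]|[_ cu]] := Hends _ _ Jb; subst.
  by rewrite Hb in U1.
by rewrite inE Hc orbT in U1.
Qed.

Lemma path_xmap (V E : finType) (G G1 : mgraph V E) w x y e f u v p :
  XD G G1 w x y e f -> is_path G1 u v p -> is_path G u v (xmap w y e f p).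
Proof.
move=> X; have [[wG wG1 sub xy] _] := X.
move=> /and4P[W U A L]; apply/and4P; split.
- exact: walk_xmap X W.
- exact: uniq_xmap X W U A.
- move: A => /= /andP[Au /allP A]; rewrite (subsetP sub _ Au) /=.
  apply/allP => z /xmap_snd [/A Hz|->] //; exact: (subsetP sub).
- by rewrite xmap_last.
Qed.

Lemma mem_tl (T : eqType) (u z : T) l : z \in l -> z \in u :: l.
Proof. by rewrite inE => ->; rewrite orbT. Qed.

Lemma in_inner (V E : finType) u v z (p : seq (E * V)) :
  z \in u :: map snd p -> z != u -> z != v -> z \in inner u v p.
Proof. by move=> Hz zu zv; rewrite /inner mem_filter zu zv. Qed.

Lemma f_ends (V E : finType) (G G1 : mgraph V E) w x y e f u p :
  XD G G1 w x y e f -> walk G1 u p -> f \in map fst p ->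
  x \in u :: map snd p /\ y \in u :: map snd p.
Proof.
move=> [_ [_ _ _ _ Hf]] W /mapP[[g c] Hgc /= E1]; subst g.
have [b Hb Jb] := step_mem W Hgc.
have Hc : c \in u :: map snd p by rewrite inE; apply/orP; right; apply/mapP; exists (f, c).
by have [[bx cy]|[by' cx]] := Hf _ _ Jb; [rewrite -bx -cy | rewrite -by' -cx].
Qed.

Lemma xmap_dist (V E : finType) (G G1 : mgraph V E) w x y e f u v p q :
  XD G G1 w x y e f -> u != v -> is_path G1 u v p -> is_path G1 u v q ->
  p != q -> int_disjoint u v p q ->
  xmap w y e f p != xmap w y e f q /\ int_disjoint u v (xmap w y e f p) (xmap w y e f q).
Proof.
move=> X uv Pp Pq npq D; have [[wG wG1 sub xy] [Je Jf ef Hg Hf]] := X.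
move: (Pp) (Pq) => /and4P[Wp Up /allP Ap /eqP Lp] /and4P[Wq Uq /allP Aq /eqP Lq].
have wp : w \notin map snd p.
  by apply/negP => Hw; move: (Ap w (mem_tl u Hw)); rewrite (negbTE wG1).
have wq : w \notin map snd q.
  by apply/negP => Hw; move: (Aq w (mem_tl u Hw)); rewrite (negbTE wG1).
split; first by apply: contraNneq npq => /(xmap_inj ef wp wq) ->.
move=> z; rewrite /inner !mem_filter => /andP[/andP[zu zv] Hzp].
apply/negP => /andP[_ Hzq].
move: Hzp Hzq; rewrite !inE (negbTE zu) /= => Hzp Hzq.
case: (xmap_snd Hzp) => [Hp|zw]; case: (xmap_snd Hzq) => [Hq|zw'].
- by have := D z (in_inner (mem_tl u Hp) zu zv); rewrite (in_inner (mem_tl u Hq) zu zv).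
- subst z; by rewrite Hp in wp.
- subst z; by rewrite Hq in wq.
subst z.
have fp := xmap_w Hzp wp; have fq := xmap_w Hzq wq.
have [xp yp] := f_ends X Wp fp; have [xq yq] := f_ends X Wq fq.
have xuv : (x == u) || (x == v).
  apply/negPn/negP => /norP[xu xv].
  by have := D x (in_inner xp xu xv); rewrite (in_inner xq xu xv).
have yuv : (y == u) || (y == v).
  apply/negPn/negP => /norP[yu yv].
  by have := D y (in_inner yp yu yv); rewrite (in_inner yq yu yv).
have Hends : forall b c, joins G1 f b c -> (b = u /\ c = v) \/ (b = v /\ c = u).
  move=> b c /Hf; case/orP: xuv => /eqP xu; case/orP: yuv => /eqP yu; subst;
    rewrite ?eqxx // in xy; tauto.
have E1 := only_direct Wp Up Lp fp Hends; have E2 := only_direct Wq Uq Lq fq Hends.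
by rewrite E1 E2 eqxx in npq.
Qed.

Lemma Qtric_x (V E : finType) (G G1 : mgraph V E) w x y e f (Q : {set V}) :
  XD G G1 w x y e f -> Qtriconnected G1 Q -> Qtriconnected G Q.
Proof.
move=> X [HQ Ht]; have [[wG wG1 sub xy] _] := X; split; first exact: subset_trans sub.
move=> u v Hu Hv uv.
apply: (tric_map (m := xmap w y e f) _ _ (Ht u v Hu Hv uv)).
  by move=> p; apply: path_xmap X.
by move=> p q Pp Pq npq D; apply: xmap_dist X uv Pp Pq npq D.
Qed.

Lemma joins_del_edge (V E : finType) (G : mgraph V E) g g' b c :
  joins (del_edge G g) g' b c = (g' != g) && joins G g' b c.
Proof. by rewrite /joins /= !inE andbA. Qed.

Lemma joins_del_vertex (V E : finType) (G : mgraph V E) z g b c :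
  joins (del_vertex G z) g b c = [&& joins G g b c, src G g != z & tgt G g != z].
Proof.
rewrite /joins /= !inE.
by case: (g \in eset G); case: (src G g != z); case: (tgt G g != z); rewrite /= ?andbT ?andbF.
Qed.

Lemma joins_st (V E : finType) (G : mgraph V E) g b c :
  joins G g b c -> (src G g = b /\ tgt G g = c) \/ (src G g = c /\ tgt G g = b).
Proof. by case/andP=> _ /orP[/andP[/eqP -> /eqP ->]|/andP[/eqP -> /eqP ->]]; auto. Qed.

Lemma joins_of_st (V E : finType) (G : mgraph V E) g b c :
  g \in eset G -> (src G g = b /\ tgt G g = c) \/ (src G g = c /\ tgt G g = b) -> joins G g b c.
Proof. by rewrite /joins => -> [[-> ->]|[-> ->]]; rewrite !eqxx ?orbT. Qed.

Lemma contr_ends_f (V E : finType) (H : mgraph V E) w x y e f :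
  SD H w x y e f ->
  (src (contr H w x e f) f = x /\ tgt (contr H w x e f) f = y) \/
  (src (contr H w x e f) f = y /\ tgt (contr H w x e f) f = x).
Proof.
move=> [[_ _ _ xw yw] [_ Jf _ _]] /=; rewrite eqxx /=.
case: (joins_st Jf) => [[-> ->]|[-> ->]]; rewrite eqxx ?(negbTE yw); auto.
Qed.

Lemma contr_st_nf (V E : finType) (H : mgraph V E) w x e f g :
  g != f -> src (contr H w x e f) g = src H g /\ tgt (contr H w x e f) g = tgt H g.
Proof. by move=> gf /=; rewrite (negbTE gf). Qed.

Lemma wf_joins (V E : finType) (H : mgraph V E) g b c :
  wf H -> joins H g b c -> b \in vset H /\ c \in vset H.
Proof.
move=> W J; have [s t] := W g (proj1 (andP J)).
by case: (joins_st J) => [[<- <-]|[<- <-]].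
Qed.

Lemma first_step (V E : finType) (H : mgraph V E) w x y e f v p :
  SD H w x y e f -> v != w -> is_path H w v p ->
  exists p', p = (e, x) :: p' \/ p = (f, y) :: p'.
Proof.
move=> S vw; have [[_ _ _ xw yw] [Je Jf ef _]] := S.
case: p => [|[g z] p] /and4P[W _ _ /eqP L]; first by rewrite -L eqxx in vw.
move: W => /= /andP[J _]; exists p.
have [ge|gf] := inc_w S J (or_introl erefl); subst g.
  have [[_ zx]|[wx _]] := joins_ends Je J; last by rewrite wx eqxx in xw.
  by left; rewrite zx.
have [[_ zy]|[wy _]] := joins_ends Jf J; last by rewrite wy eqxx in yw.
by right; rewrite zy.
Qed.

Lemma tail_nil (V E : finType) (G : mgraph V E) a v g p :
  is_path G a v ((g, v) :: p) -> p = [::].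
Proof.
case: p => [|[g2 z2] p] // /and4P[_ /= /andP[_ /andP[U _]] _ /eqP L].
by move: U; rewrite -{1}L mem_last.
Qed.

Lemma same_first (V E : finType) (G : mgraph V E) w v g z p q :
  is_path G w v ((g, z) :: p) -> is_path G w v ((g, z) :: q) ->
  int_disjoint w v ((g, z) :: p) ((g, z) :: q) -> z != w -> p = q.
Proof.
move=> Pp Pq D zw; case: (eqVneq z v) => zv.
  by subst z; rewrite (tail_nil Pp) (tail_nil Pq).
have Hz r : z \in inner w v ((g, z) :: r) by apply: in_inner => //; rewrite !inE eqxx orbT.
by have := D z (Hz p); rewrite Hz.
Qed.

Lemma no_tric_w (V E : finType) (H : mgraph V E) w x y e f v :
  SD H w x y e f -> v != w -> ~ triconnected H w v.
Proof.
move=> S vw [p1 [p2 [p3 [[P1 P2 P3] [[N12 N13 N23] [D12 D13 D23]]]]]].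
have [[_ _ _ xw yw] _] := S.
have [q1 [E1|E1]] := first_step S vw P1; have [q2 [E2|E2]] := first_step S vw P2;
  have [q3 [E3|E3]] := first_step S vw P3; subst p1 p2 p3;
  (try by move: N12; rewrite (same_first P1 P2 D12) ?eqxx);
  (try by move: N13; rewrite (same_first P1 P3 D13) ?eqxx);
  (try by move: N23; rewrite (same_first P2 P3 D23) ?eqxx).
Qed.

Lemma step_SD (V E : finType) (H : mgraph V E) w x e f :
  wf H -> w \in vset H -> deg H w = 2 -> x != w -> joins H e w x ->
  f \in eset H -> f != e -> (src H f == w) || (tgt H f == w) ->
  SD H w x (if src H f == w then tgt H f else src H f) e f.
Proof.
move=> W wH dw xw Je fH fe fw; set y := (if _ then _ else _).
have Jf : joins H f w y.
  rewrite /y; case: (eqVneq (src H f) w) => s; apply: (joins_of_st fH).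
    by left.
  by right; split => //; apply/eqP; rewrite (negbTE s) in fw.
set A := [set g in eset H | src H g == w]; set B := [set g in eset H | tgt H g == w].
have dAB : #|A :|: B| + #|A :&: B| = 2 by rewrite cardsUI.
have inAB g b : joins H g w b -> g \in A :|: B.
  by move=> J; rewrite !inE; case/andP: J => -> /orP[/andP[-> _]|/andP[-> _]]; rewrite ?orbT.
have eAB := inAB _ _ Je; have fAB := inAB _ _ Jf.
have c2 : 2 <= #|A :|: B|.
  have := cards2 e f; rewrite eq_sym fe => <-; apply: subset_leq_card.
  by apply/subsetP => g; rewrite in_set2 => /orP[/eqP ->|/eqP ->].
have yw : y != w.
  apply/eqP => yw; have : f \in A :&: B.
    rewrite !inE fH /=; case: (joins_st Jf) => [[-> ->]|[-> ->]]; by rewrite yw eqxx.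
  move=> fI; have : 0 < #|A :&: B| by apply/card_gt0P; exists f.
  by move: dAB c2; case: #|A :&: B| => [|k] //; case: #|A :|: B| => [|[|[|n]]].
split; first by split => //; [exact: (wf_joins W Je).2 | exact: (wf_joins W Jf).2].
split => //; first by rewrite eq_sym.
move=> g gH ge gf; apply/negPn/negP; rewrite negb_and !negbK => gw.
have gAB : g \in A :|: B by rewrite !inE gH.
have : 3 <= #|A :|: B|.
  have -> : 3 = #|[set e; f; g]|.
    by rewrite -setUA cardsU1 cards2 !inE negb_or [e == f]eq_sym (negbTE fe) [e == g]eq_sym (negbTE ge) [f == g]eq_sym (negbTE gf).
  apply: subset_leq_card; apply/subsetP => h Hh.
  have : [|| h == e, h == f | h == g] by move: Hh; rewrite !inE orbA.
  by case/or3P => /eqP ->.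
by move: dAB; case: #|A :|: B| => [|[|[|n]]].
Qed.

Lemma step_min (V E : finType) (H H1 : mgraph V E) (Q : {set V}) :
  wf H -> minimal_Qtriconnected H Q -> contract_step H H1 ->
  wf H1 /\ minimal_Qtriconnected H1 Q.
Proof.
move=> W [Qt Hme Hmv] [w [x [e [f [[wH dw xw Je] [[fH fe fw] E1]]]]]]; subst H1.
have S := step_SD W wH dw xw Je fH fe fw.
set y := (if _ then _ else _) in S.
have [[_ xH yH _ yw] [_ Jf ef Hinc]] := S.
have eH : e \in eset H by case/andP: Je.
have : [exists u in Q, exists v in Q, u != v].
  case: (boolP [exists u in Q, exists v in Q, u != v]) => // N.
  exfalso; apply: (Hme e eH); split; first exact: Qt.1.
  move=> u v Hu Hv uv; exfalso; move/negP: N; apply; apply/existsP; exists u.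
  by rewrite Hu; apply/existsP; exists v; rewrite Hv uv.
case/existsP => u0 /andP[Hu0 /existsP[v0 /andP[Hv0 uv0]]].
have wQ : w \notin Q.
  apply/negP => wQ.
  have [v Hv vw] : exists2 v, v \in Q & v != w.
    case: (eqVneq u0 w) => [uw|uw]; last by exists u0.
    by exists v0 => //; rewrite -uw eq_sym.
  apply: (no_tric_w S vw); apply: Qt.2 => //; by rewrite eq_sym.
have xy : x != y.
  apply/negP => /eqP xy; apply: (Hmv w wH); split.
    apply/subsetP => z Hz; rewrite /= in_setD1 (subsetP Qt.1 _ Hz) andbT.
    by apply: contraNneq wQ => <-.
  move=> u v Hu Hv uv.
  have uw : u != w by apply: contraNneq wQ => <-.
  have vw : v != w by apply: contraNneq wQ => <-.
  apply: (tric_map (m := id) _ _ (Qt.2 u v Hu Hv uv)); last by move=> p q _ _ ? ?; split.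
  move=> p P; move: (P) => /and4P[Wp Up /allP Ap /eqP Lp].
  have wp : w \notin u :: map snd p.
    rewrite inE negb_or eq_sym uw /=; apply/negP => Hw.
    by have /andP[] := thru_w S Wp Up uw ltac:(by rewrite Lp) Hw; rewrite xy eqxx.
  apply: (path_mono _ _ P).
    move=> g b c Hb Hc J; rewrite joins_del_vertex J /=.
    have bw : b != w by apply: contraNneq wp => <-.
    have cw : c != w by apply: contraNneq wp => <-.
    by case: (joins_st J) => [[-> ->]|[-> ->]]; rewrite ?bw ?cw.
  move=> z Hz; rewrite /= in_setD1 Ap // andbT.
  by apply: contraNneq wp => <-.
change (wf (contr H w x e f) /\ minimal_Qtriconnected (contr H w x e f) Q).
have sub2 z : (vset H :\ w) :\ z \subset vset H :\ z.
  by apply/subsetP => v; rewrite !in_setD1 => /andP[-> /andP[_ ->]].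
have ndel g' b c : g' != f -> joins (contr H w x e f) g' b c -> joins H g' b c /\ g' != e.
  move=> g'f J; case: (eqVneq g' e) => g'e; first by rewrite g'e contr_joins_e in J.
  by rewrite -(contr_joins _ _ S g'e g'f).
have fends b c : joins (contr H w x e f) f b c -> (b = x /\ c = y) \/ (b = y /\ c = x).
  by rewrite (contr_joins_f _ _ S) => /orP[/andP[/eqP-> /eqP->]|/andP[/eqP-> /eqP->]]; auto.
split.
  move=> g; rewrite [eset _]/= in_setD1 => /andP[ge gH].
  case: (eqVneq g f) => gf.
    subst g; case: (contr_ends_f S) => [[-> ->]|[-> ->]]; rewrite /= !in_setD1 ?xw ?yw ?xH ?yH //.
  have [-> ->] := contr_st_nf H w x e gf.
  have /andP[s t] := Hinc g gH ge gf; have [sH tH] := W g gH.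
  by rewrite /= !in_setD1 s t sH tH.
split.
- exact: Qtric_contr S wQ Qt.
- move=> g; rewrite [eset _]/= in_setD1 => /andP[ge gH] Qg.
  case: (eqVneq g f) => gf.
    subst g; apply: (Hme f fH); apply: (Qtric_mono _ _ Qg); last exact: subD1set.
    move=> g' b c; rewrite !joins_del_edge => /andP[g'f J]; rewrite g'f /=.
    exact: (ndel _ _ _ g'f J).1.
  apply: (Hme g gH); apply: (Qtric_x (G1 := del_edge (contr H w x e f) g) (w := w) (x := x) (y := y) (e := e) (f := f)) Qg.
  split; split => //.
  + by rewrite /= in_setD1 eqxx.
  + exact: subD1set.
  + by rewrite joins_del_edge Je andbT eq_sym.
  + by rewrite joins_del_edge Jf andbT eq_sym.
  + move=> g' b c g'f; rewrite !joins_del_edge => /andP[-> J] /=.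
    exact: (ndel _ _ _ g'f J).1.
  + by move=> b c; rewrite joins_del_edge => /andP[_ /fends].
- move=> z; rewrite [vset _]/= in_setD1 => /andP[zw zH] Qz.
  case: (boolP ((z == x) || (z == y))) => zxy.
    apply: (Hmv z zH); apply: (Qtric_mono _ _ Qz); last exact: sub2.
    move=> g' b c; rewrite !joins_del_vertex => /and3P[J s t].
    case: (eqVneq g' f) => g'f.
      subst g'; move: s t; case: (contr_ends_f S) => [[-> ->]|[-> ->]];
        by case/orP: zxy => /eqP ->; rewrite eqxx.
    have [s' t'] := contr_st_nf H w x e g'f; rewrite s' t' in s t.
    by rewrite (ndel _ _ _ g'f J).1 s t.
  rewrite negb_or in zxy; case/andP: zxy => zx zy.
  apply: (Hmv z zH); apply: (Qtric_x (G1 := del_vertex (contr H w x e f) z) (w := w) (x := x) (y := y) (e := e) (f := f)) Qz.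
  split; split => //.
  + by rewrite in_setD1 eq_sym zw.
  + by rewrite /= !in_setD1 eqxx andbF.
  + exact: sub2.
  + by rewrite joins_del_vertex Je /=; case: (joins_st Je) => [[-> ->]|[-> ->]];
      rewrite ![_ == z]eq_sym zw zx.
  + by rewrite joins_del_vertex Jf /=; case: (joins_st Jf) => [[-> ->]|[-> ->]];
      rewrite ![_ == z]eq_sym zw zy.
  + move=> g' b c g'f; rewrite !joins_del_vertex => /and3P[J s t].
    have [s' t'] := contr_st_nf H w x e g'f; rewrite s' t' in s t.
    by rewrite (ndel _ _ _ g'f J).1 s t.
  + by move=> b c; rewrite joins_del_vertex => /and3P[/fends].
Qed.

Lemma contracts_min (V E : finType) (H H' : mgraph V E) (Q : {set V}) :
  contracts H H' -> wf H -> minimal_Qtriconnected H Q -> minimal_Qtriconnected H' Q.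
Proof.
elim=> [G|G G1 G2 St _ IH] W M //.
have [W1 M1] := step_min W M St; exact: IH W1 M1.
Qed.

Theorem lemma4 (V E : finType) (H : mgraph V E) (Q : {set V}) :
  wf H -> simple H -> minimal_Qtriconnected H Q ->
  forall H' : mgraph V E, contracted_version H H' ->
  minimal_Qtriconnected H' Q.
Proof.
move=> W _ M H' [C _]; exact: contracts_min C W M.
Qed.
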